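(* Every $3$-CET with exactly one flip has a periodic point. Consequently there is no transitive $3$-CET with exactly one flip.
   Context: Let $S^1=[0,1]/(0\sim 1)$ with the orientation induced by $[0,1]$. Let $I_1,\dots,I_n$ be pairwise disjoint open subintervals of $S^1$ whose closures cover $S^1$. An $n$-CET is an injective map $T:\bigcup_{i=1}^n I_i\to S^1$ which is an isometry on each $I_i$ and which cannot be continuously extended to a larger open subset of $S^1$ (so it has exactly $n$ discontinuity points). A flip is a subinterval $I_i$ on which $T$ reverses orientation. A periodic point is $p$ with $T^m(p)=p$ for some $m\ge1$ (with $p\in\mathrm{Dom}(T^m)$). The orbit of $p$ is $\{T^m(p): m\in\mathbb{Z},\ p\in\mathrm{Dom}(T^m)\}$ and $T$ is transitive if some orbit is dense in $S^1$. *)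

(* Defs.v *)
From Stdlib Require Import Reals Lra Lia.
Open Scope R_scope.

(** The circle S^1 = [0,1]/(0~1) is represented by the reals in [0,1). *)
Definition in_S1 (x : R) : Prop := 0 <= x < 1.

Definition modone (x : R) : R := frac_part x.

Definition cdist (x y : R) : R := Rmin (frac_part (x - y)) (frac_part (y - x)).

Definition arc (a l : R) (x : R) : Prop :=
  exists t, 0 < t < l /\ x = modone (a + t).

Definition carc (a l : R) (x : R) : Prop :=
  exists t, 0 <= t <= l /\ x = modone (a + t).

Definition S1_open (U : R -> Prop) : Prop :=
  (forall x, U x -> in_S1 x) /\
  (forall x, U x -> exists d, 0 < d /\ forall y, in_S1 y -> cdist x y < d -> U y).

Definition S1_continuous_on (U : R -> Prop) (g : R -> R) : Prop :=
  forall x, U x -> forall e, 0 < e -> exists d, 0 < d /\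
    forall y, U y -> cdist x y < d -> cdist (g x) (g y) < e.

Definition not_extendable (D : R -> Prop) (T : R -> R) : Prop :=
  ~ (exists (U : R -> Prop) (g : R -> R),
       S1_open U /\ (forall x, D x -> U x) /\ (exists x, U x /\ ~ D x) /\
       (forall x, U x -> in_S1 (g x)) /\ (forall x, D x -> g x = T x) /\
       S1_continuous_on U g).

Definition CET_pieces (n : nat) (a l : nat -> R) (D : R -> Prop) (T : R -> R) : Prop :=
  (forall i, (i < n)%nat -> in_S1 (a i) /\ 0 < l i <= 1) /\
  (forall i j x, (i < n)%nat -> (j < n)%nat -> i <> j ->
      arc (a i) (l i) x -> arc (a j) (l j) x -> False) /\
  (forall x, in_S1 x -> exists i, (i < n)%nat /\ carc (a i) (l i) x) /\
  (forall x, D x <-> exists i, (i < n)%nat /\ arc (a i) (l i) x) /\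
  (forall x, D x -> in_S1 (T x)) /\
  (forall x y, D x -> D y -> T x = T y -> x = y) /\
  (forall i x y, (i < n)%nat -> arc (a i) (l i) x -> arc (a i) (l i) y ->
      cdist (T x) (T y) = cdist x y) /\
  not_extendable D T.

(** The piece arc a l is a flip: T reverses orientation on it, i.e. T acts
    on it as a reflection t |-> c - t of S^1. *)
Definition is_flip (a l : R) (T : R -> R) : Prop :=
  exists c, forall t, 0 < t < l -> T (modone (a + t)) = modone (c - t).

Definition CET_one_flip (n : nat) (D : R -> Prop) (T : R -> R) : Prop :=
  exists a l : nat -> R, CET_pieces n a l D T /\
    exists j, (j < n)%nat /\ is_flip (a j) (l j) T /\
      forall i, (i < n)%nat -> is_flip (a i) (l i) T -> i = j.

Definition in_dom_iter (D : R -> Prop) (T : R -> R) (m : nat) (p : R) : Prop :=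
  forall k, (k < m)%nat -> D (Nat.iter k T p).

Definition has_periodic_point (D : R -> Prop) (T : R -> R) : Prop :=
  exists p m, (1 <= m)%nat /\ in_dom_iter D T m p /\ Nat.iter m T p = p.

Definition in_orbit (D : R -> Prop) (T : R -> R) (p q : R) : Prop :=
  exists m, (in_dom_iter D T m p /\ q = Nat.iter m T p) \/
            (in_dom_iter D T m q /\ Nat.iter m T q = p).

Definition transitive (D : R -> Prop) (T : R -> R) : Prop :=
  exists p, in_S1 p /\
    forall x e, in_S1 x -> 0 < e -> exists q, in_orbit D T p q /\ cdist x q < e.

(* Main.v *)
Require Import Defs.
From Stdlib Require Import Reals Lra Lia List Classical.
Import ListNotations.
Open Scope R_scope.


Definition eqm (x y : R) : Prop := exists z : Z, x = y + IZR z.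

Lemma eqm_refl x : eqm x x.
Proof. exists 0%Z. simpl. lra. Qed.
Lemma eqm_sym x y : eqm x y -> eqm y x.
Proof. intros [z H]. exists (-z)%Z. rewrite opp_IZR. lra. Qed.
Lemma eqm_trans x y w : eqm x y -> eqm y w -> eqm x w.
Proof. intros [z H] [z' H']. exists (z + z')%Z. rewrite plus_IZR. lra. Qed.
Lemma eqm_add x y u v : eqm x y -> eqm u v -> eqm (x + u) (y + v).
Proof. intros [z H] [z' H']. exists (z + z')%Z. rewrite plus_IZR. lra. Qed.
Lemma eqm_opp x y : eqm x y -> eqm (- x) (- y).
Proof. intros [z H]. exists (-z)%Z. rewrite opp_IZR. lra. Qed.
Lemma eqm_shift x y d : eqm x y -> eqm (x + d) (y + d).
Proof. intros H. apply eqm_add; auto. apply eqm_refl. Qed.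
Lemma eqm_of_eq x y : x = y -> eqm x y.
Proof. intros ->. apply eqm_refl. Qed.
Lemma eqm_one x : eqm (x + 1) x.
Proof. exists 1%Z. simpl. lra. Qed.
Lemma eqm_int x (z : Z) : eqm (x + IZR z) x.
Proof. exists z. lra. Qed.

Lemma IZR_01 (z : Z) : -1 < IZR z < 1 -> z = 0%Z.
Proof.
  intros [H1 H2]. apply lt_IZR in H2. replace (-1) with (IZR (-1)) in H1 by (simpl; lra).
  apply lt_IZR in H1. lia.
Qed.

Lemma eqm_unique x y : 0 <= x < 1 -> 0 <= y < 1 -> eqm x y -> x = y.
Proof.
  intros Hx Hy [z H]. assert (z = 0%Z) by (apply IZR_01; lra). subst z. simpl in H. lra.
Qed.

Lemma eqm_near x y : -1 < x - y < 1 -> eqm x y -> x = y.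
Proof.
  intros Hd [z H]. assert (z = 0%Z) by (apply IZR_01; lra). subst z. simpl in H. lra.
Qed.

Lemma modone_range x : 0 <= modone x < 1.
Proof. unfold modone. destruct (base_fp x). lra. Qed.

Lemma modone_eqm x : eqm (modone x) x.
Proof. unfold modone, frac_part. exists (- Int_part x)%Z. rewrite opp_IZR. lra. Qed.

Lemma modone_eqm_eq x y : eqm x y -> modone x = modone y.
Proof.
  intros H. apply eqm_unique; try apply modone_range.
  eapply eqm_trans. apply modone_eqm. eapply eqm_trans. apply H. apply eqm_sym, modone_eqm.
Qed.

Lemma modone_id x : 0 <= x < 1 -> modone x = x.
Proof. intros H. apply eqm_unique; auto. apply modone_range. apply modone_eqm. Qed.

Lemma eqm_modone_l x y : eqm x y -> eqm (modone x) y.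
Proof. intros H. eapply eqm_trans. apply modone_eqm. exact H. Qed.

Lemma frac_sum x : frac_part x + frac_part (- x) = 0 \/ frac_part x + frac_part (- x) = 1.
Proof.
  pose proof (modone_eqm x) as [z1 H1]. pose proof (modone_eqm (-x)) as [z2 H2].
  unfold modone in *. destruct (base_fp x), (base_fp (-x)).
  assert (E : frac_part x + frac_part (-x) = IZR (z1 + z2)) by (rewrite plus_IZR; lra).
  destruct (Rlt_dec (IZR (z1 + z2)) 1).
  - left. rewrite E. replace (z1 + z2)%Z with 0%Z. reflexivity. symmetry. apply IZR_01. lra.
  - right. rewrite E. assert (z1 + z2 - 1 = 0)%Z by (apply IZR_01; rewrite minus_IZR; simpl; lra).
    replace (z1 + z2)%Z with 1%Z by lia. reflexivity.
Qed.

Lemma cdist_eq u v w z :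
  cdist u v = cdist w z -> eqm (u - v) (w - z) \/ eqm (u - v) (z - w).
Proof.
  unfold cdist. intros H.
  assert (S1 := frac_sum (u - v)). assert (S2 := frac_sum (w - z)).
  replace (- (u - v)) with (v - u) in S1 by ring. replace (- (w - z)) with (z - w) in S2 by ring.
  assert (E1 := modone_eqm (u - v)). assert (E2 := modone_eqm (w - z)). assert (E3 := modone_eqm (z - w)).
  unfold modone in *.
  destruct (base_fp (u - v)), (base_fp (v - u)), (base_fp (w - z)), (base_fp (z - w)).
  assert (HH : frac_part (u - v) = frac_part (w - z) \/ frac_part (u - v) = frac_part (z - w)).
  { revert H. unfold Rmin. destruct (Rle_dec (frac_part (u - v)) (frac_part (v - u)));
    destruct (Rle_dec (frac_part (w - z)) (frac_part (z - w))); intros H;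
    destruct S1, S2; first [left; lra | right; lra]. }
  destruct HH as [HH|HH]; [left|right]; rewrite HH in E1; apply eqm_sym in E1;
  eapply eqm_trans; eauto.
Qed.

Lemma cdist_of_eqm u v d : eqm (v - u) d -> 0 <= d < 1 -> cdist u v = Rmin (1 - d) d \/ (d = 0 /\ cdist u v = 0).
Proof.
  intros H Hd. unfold cdist.
  assert (A : frac_part (v - u) = d).
  { apply eqm_unique; auto. destruct (base_fp (v - u)); lra. apply (eqm_modone_l _ _ H). }
  assert (S1 := frac_sum (v - u)). replace (- (v - u)) with (u - v) in S1 by ring.
  destruct (base_fp (u - v)). destruct S1.
  right. split; [lra|]. rewrite Rmin_left; lra.
  left. replace (frac_part (u - v)) with (1 - d) by lra. rewrite A. reflexivity.
Qed.

Lemma cdist_small u v e : cdist u v < e -> exists d, Rabs d < e /\ eqm v (u + d).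
Proof.
  unfold cdist, Rmin. intros H.
  assert (S1 := frac_sum (v - u)). replace (- (v - u)) with (u - v) in S1 by ring.
  assert (E1 := modone_eqm (v - u)). unfold modone in E1.
  destruct (base_fp (u - v)), (base_fp (v - u)).
  destruct (Rle_dec (frac_part (u - v)) (frac_part (v - u))).
  - destruct S1.
    + exists (frac_part (v - u)). split. rewrite Rabs_right; lra.
      destruct E1 as [z Hz]. exists (- z)%Z. rewrite opp_IZR. lra.
    + exists (frac_part (v - u) - 1). split.
      rewrite Rabs_left1; lra.
      destruct E1 as [z Hz]. exists (- z + 1)%Z. rewrite plus_IZR, opp_IZR. simpl. lra.
  - exists (frac_part (v - u)). split. rewrite Rabs_right; lra.
    destruct E1 as [z Hz]. exists (- z)%Z. rewrite opp_IZR. lra.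
Qed.

Lemma cdist_pos u v : 0 <= u < 1 -> 0 <= v < 1 -> u <> v -> 0 < cdist u v.
Proof.
  intros Hu Hv Hne. unfold cdist.
  assert (E1 := modone_eqm (v - u)). assert (E2 := modone_eqm (u - v)). unfold modone in *.
  destruct (base_fp (u - v)), (base_fp (v - u)).
  assert (frac_part (u - v) <> 0).
  { intros Hz0. apply Hne. apply eqm_near. lra. destruct E2 as [z Hz]. exists (-z)%Z. rewrite opp_IZR. lra. }
  assert (frac_part (v - u) <> 0).
  { intros Hz0. apply Hne. apply eqm_near. lra. destruct E1 as [z Hz]. exists z. lra. }
  unfold Rmin. destruct Rle_dec; lra.
Qed.


Definition wr (c y : R) : R := if Rlt_dec y c then y else y - c.
Definition F (c b s k x : R) : R :=
  if Rlt_dec x (b - s) then wr c (x + s + k)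
  else if Rlt_dec x b then wr c (x + s - b + k)
  else wr c (k + b + c - x).
Definition good (c b s x : R) : Prop := 0 < x < c /\ x <> b /\ x <> b - s.
Definition valid (c b s k : R) : Prop := 0 <= b < c /\ 0 <= s <= b /\ 0 <= k < c.
Definition wr2 (m z : R) : R := if Rlt_dec z m then z else if Rlt_dec z (2*m) then z - m else z - 2*m.
Definition rinv (b th y : R) : R :=
  if Rle_dec th y then y - th else if Rle_dec (th - b) y then y - th + b else y - th + 2*b.
Definition TL (c b s k x : R) : R :=
  if Rlt_dec (F c b s k x) b then F c b s k x else F c b s k (F c b s k x).

Ltac dall := repeat match goal with
  | |- context [Rlt_dec ?a ?b] => destruct (Rlt_dec a b)
  | |- context [Rle_dec ?a ?b] => destruct (Rle_dec a b)
  end.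

Lemma step_corr c b s k y :
  valid c b s k -> c <= k + b -> k <= b ->
  good b (b - (c - b)) (b - k) y ->
  let x := rinv b (k + s - (c - b)) y in
  good c b s x -> F c b s k x <> b ->
  rinv b (k + s - (c - b)) (F b (b - (c - b)) (b - k) (wr2 b (2*k + s - (c - b))) y)
  = TL c b s k x.
Proof.
  intros [Hb [Hs Hk]] H1 H2 [Hy [Hy1 Hy2]] x [Hx [Hx1 Hx2]] HF.
  subst x. revert Hx Hx1 Hx2 HF. unfold rinv, TL, F, wr, wr2.
  dall; intros; try lra.
Qed.



Lemma wr2_rinv b th y : 0 <= th < 2 * b -> 0 <= y < b -> wr2 b (rinv b th y + th) = y.
Proof. intros. unfold wr2, rinv. dall; lra. Qed.

Lemma rinv_range b th y : 0 <= th < 2 * b -> 0 <= y < b -> 0 <= rinv b th y < b.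
Proof. intros. unfold rinv. dall; lra. Qed.

Lemma F_range c b s k x : valid c b s k -> good c b s x -> 0 <= F c b s k x < c.
Proof. intros [? [? ?]] [? [? ?]]. unfold F, wr. dall; lra. Qed.

Definition pre (c b s k z : R) : list R :=
  [z - s - k; z - s - k + c; z - s + b - k; z - s + b - k + c; k + b + c - z; k + b - z].

Lemma pre_spec c b s k x : In x (pre c b s k (F c b s k x)).
Proof.
  unfold pre, F, wr. simpl.
  dall; first [ left; ring | right; left; ring | do 2 right; left; ring | do 3 right; left; ring
              | do 4 right; left; ring | do 5 right; left; ring ].
Qed.

Definition Reach (f : R -> R) (P : R -> Prop) (x z : R) (n : nat) : Prop :=
  (forall i, (i < n)%nat -> P (Nat.iter i f x)) /\ Nat.iter n f x = z.

Lemma Reach_trans f P x z w n n' : Reach f P x z n -> Reach f P z w n' -> Reach f P x w (n' + n).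
Proof.
  intros [H1 E1] [H2 E2]. split.
  - intros i Hi. destruct (Nat.lt_ge_cases i n). auto.
    replace i with ((i - n) + n)%nat by lia. rewrite Nat.iter_add, E1. apply H2. lia.
  - rewrite Nat.iter_add, E1. auto.
Qed.

Lemma Reach0 f P x : Reach f P x x 0.
Proof. split. intros; lia. reflexivity. Qed.

Lemma Reach1 f (P : R -> Prop) x : P x -> Reach f P x (f x) 1.
Proof. intros H. split. intros i Hi. replace i with 0%nat by lia. simpl. auto. reflexivity. Qed.

Lemma avoid l u v : u < v -> exists x, u < x < v /\ ~ In x l.
Proof.
  revert u v. induction l as [|a l IH]; intros u v Huv.
  - exists ((u + v) / 2). split. lra. simpl. tauto.
  - destruct (Rlt_dec u a) as [Ha|Ha].
    + destruct (IH u (Rmin v a) ltac:(apply Rmin_glb_lt; lra)) as [x [Hx Hn]].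
      exists x. assert (x < v /\ x < a) by (split; eapply Rlt_le_trans; [apply Hx| apply Rmin_l | apply Hx | apply Rmin_r]).
      split. lra. simpl. intros [E|E]; [lra|auto].
    + destruct (IH u v Huv) as [x [Hx Hn]]. exists x. split; auto. simpl. intros [E|E]; [lra|auto].
Qed.

Definition goodB c b s (bad : list R) x := good c b s x /\ ~ In x bad.

Lemma overlap_per c b s k bad u v :
  valid c b s k -> b <= u -> u < v -> v <= c ->
  (forall x, u < x < v -> F c b s k x = k + b + c - x /\ u < k + b + c - x < v) \/
  (forall x, u < x < v -> F c b s k x = k + b - x /\ u < k + b - x < v) ->
  exists y m, (1 <= m)%nat /\ Reach (F c b s k) (goodB c b s bad) y y m.
Proof.
  intros Hv Hu Huv Hvc Hcase.
  destruct Hv as [Hb [Hs Hk]].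
  destruct (avoid (bad ++ map (fun z => k + b + c - z) bad ++ map (fun z => k + b - z) bad) u v Huv)
    as [y [Hy Hn]].
  exists y, 2%nat. split. lia.
  assert (Hgen : forall z, u < z < v -> good c b s z) by (intros z Hz; repeat split; lra).
  assert (HIn : forall (f : R -> R) z, In (f z) (map f bad) <-> In (f z) (map f bad)) by tauto.
  destruct Hcase as [H|H]; destruct (H y Hy) as [E Hr];
  (split; [intros i Hi; destruct i as [|[|i]]; [ | | lia]; simpl; [split; [auto| intro; apply Hn; apply in_or_app; auto] |]
   | ]).
  - rewrite E. split. auto. intros Hb'. apply Hn. apply in_or_app. right. apply in_or_app. left.
    replace y with (k + b + c - (k + b + c - y)) by ring. apply in_map. auto.
  - simpl. rewrite E. destruct (H _ Hr) as [E' _]. rewrite E'. ring.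
  - rewrite E. split. auto. intros Hb'. apply Hn. apply in_or_app. right. apply in_or_app. right.
    replace y with (k + b - (k + b - y)) by ring. apply in_map. auto.
  - simpl. rewrite E. destruct (H _ Hr) as [E' _]. rewrite E'. ring.
Qed.

Lemma in_map_rho (f : R -> R) (l : list R) x y : f x = y -> In x l -> In y (map f l).
Proof. intros <- H. apply in_map. auto. Qed.

Lemma abs_per : forall N c b s k bad, valid c b s k -> c <= INR N * (c - b) ->
  exists y m, (1 <= m)%nat /\ Reach (F c b s k) (goodB c b s bad) y y m.
Proof.
  induction N as [|N IH]; intros c b s k bad Hv HN.
  { destruct Hv as [[? ?] _]. simpl in HN. lra. }
  destruct (Rlt_dec (k + b) c) as [Hc|Hc].
  { apply (overlap_per c b s k bad (k + b) c); auto; try (destruct Hv as [? [? ?]]; lra).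
    left. intros x Hx. split; [|lra]. destruct Hv as [? [? ?]].
    unfold F, wr. dall; lra. }
  destruct (Rlt_dec b k) as [Hk|Hk].
  { apply (overlap_per c b s k bad b k); auto; try (destruct Hv as [? [? ?]]; lra).
    right. intros x Hx. split; [|lra]. destruct Hv as [? [? ?]].
    unfold F, wr. dall; lra. }
  assert (Hc' : c <= k + b) by lra. assert (Hk' : k <= b) by lra. clear Hc Hk.
  destruct Hv as [Hb [Hs Hk]] eqn:Hveq.
  set (al := c - b) in *.
  set (th := k + s - al).
  set (rho := fun x => wr2 b (x + th)).
  set (bad' := map rho (0 :: (b - s) :: bad ++ flat_map (pre c b s k) (b :: bad))).
  assert (Hth : 0 <= th < 2 * b) by (unfold th, al; lra).
  assert (Hv' : valid b (b - al) (b - k) (wr2 b (2 * k + s - al))).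
  { unfold valid, wr2. unfold al. dall; lra. }
  assert (HN' : b <= INR N * (b - (b - al))).
  { rewrite S_INR in HN. unfold al in *. lra. }
  destruct (IH _ _ _ _ bad' Hv' HN') as [y0 [m0 [Hm0 [Hgood Hret]]]].
  set (F' := F b (b - al) (b - k) (wr2 b (2 * k + s - al))) in *.
  assert (Hstep : forall y, goodB b (b - al) (b - k) bad' y ->
     exists n, (1 <= n)%nat /\ Reach (F c b s k) (goodB c b s bad) (rinv b th y) (rinv b th (F' y)) n).
  { intros y [Hgy Hny].
    set (x := rinv b th y).
    assert (Hyr : 0 <= y < b) by (destruct Hgy; lra).
    assert (Hxr : 0 <= x < b) by (apply rinv_range; auto).
    assert (Hbad : forall l, In x l -> In y (map rho l)).
    { intros l Hl. apply (in_map_rho rho l x y); auto. unfold rho, x. apply wr2_rinv; auto. }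
    assert (Hxg : good c b s x).
    { assert (x <> 0) by (intro E; apply Hny; apply Hbad; rewrite E; simpl; auto).
      assert (x <> b - s) by (intro E; apply Hny; apply Hbad; rewrite E; simpl; auto).
      repeat split; auto; try lra. }
    assert (Hxb : ~ In x bad).
    { intro E. apply Hny. apply Hbad. do 2 apply in_cons. apply in_or_app. left. auto. }
    assert (HFl : forall z, In z (b :: bad) -> F c b s k x = z -> False).
    { intros z Hz E. apply Hny. apply Hbad. do 2 apply in_cons. apply in_or_app. right.
      apply in_flat_map. exists z. split; auto. rewrite <- E. apply pre_spec. }
    assert (HFb : F c b s k x <> b) by (intro E; apply (HFl b); simpl; auto).
    assert (HFbad : ~ In (F c b s k x) bad) by (intro E; apply (HFl (F c b s k x)); simpl; auto).
    assert (Hcorr := step_corr c b s k y Hv Hc' Hk' Hgy Hxg HFb).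
    fold al th x in Hcorr. fold F' in Hcorr. rewrite Hcorr. unfold TL.
    assert (HFr := F_range c b s k x Hv Hxg).
    destruct (Rlt_dec (F c b s k x) b).
    - exists 1%nat. split. lia. apply Reach1. split; auto.
    - exists 2%nat. split. lia.
      apply (Reach_trans _ _ _ (F c b s k x) _ 1 1); apply Reach1; split; auto.
      repeat split; lra. }
  assert (Hall : forall i, (i <= m0)%nat -> exists n, (i <= n)%nat /\
            Reach (F c b s k) (goodB c b s bad) (rinv b th y0) (rinv b th (Nat.iter i F' y0)) n).
  { induction i as [|i IHi]; intros Hi.
    - exists 0%nat. split. lia. apply Reach0.
    - destruct (IHi ltac:(lia)) as [n [Hn HR]].
      destruct (Hstep (Nat.iter i F' y0) (Hgood i ltac:(lia))) as [n' [Hn' HR']].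
      exists (n' + n)%nat. split. lia. simpl. eapply Reach_trans; eauto. }
  destruct (Hall m0 (le_n _)) as [n [Hn HR]].
  exists (rinv b th y0), n. split. lia. rewrite Hret in HR. exact HR.
Qed.


Definition goodE c b s e x := good c b s x /\ x <> e.

Definition dl c b s e x := Rmin (Rmin (Rabs x) (Rabs (x - c)))
   (Rmin (Rmin (Rabs (x - b)) (Rabs (x - (b - s)))) (Rabs (x - e))).

Lemma near_same h x z : Rabs h < Rabs (x - z) -> (x < z -> x + h < z /\ x - h < z) /\ (z < x -> z < x + h /\ z < x - h).
Proof. unfold Rabs. repeat destruct Rcase_abs; intros; split; intros; split; lra. Qed.

Lemma dl_bounds c b s e x h : Rabs h < dl c b s e x ->
  Rabs h < Rabs x /\ Rabs h < Rabs (x - c) /\ Rabs h < Rabs (x - b) /\ Rabs h < Rabs (x - (b - s)) /\ Rabs h < Rabs (x - e).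
Proof.
  unfold dl. intros H.
  assert (H1 := Rmin_l (Rmin (Rabs x) (Rabs (x - c))) (Rmin (Rmin (Rabs (x - b)) (Rabs (x - (b - s)))) (Rabs (x - e)))).
  assert (H2 := Rmin_r (Rmin (Rabs x) (Rabs (x - c))) (Rmin (Rmin (Rabs (x - b)) (Rabs (x - (b - s)))) (Rabs (x - e)))).
  assert (H3 := Rmin_l (Rabs x) (Rabs (x - c))). assert (H4 := Rmin_r (Rabs x) (Rabs (x - c))).
  assert (H5 := Rmin_l (Rmin (Rabs (x - b)) (Rabs (x - (b - s)))) (Rabs (x - e))).
  assert (H6 := Rmin_r (Rmin (Rabs (x - b)) (Rabs (x - (b - s)))) (Rabs (x - e))).
  assert (H7 := Rmin_l (Rabs (x - b)) (Rabs (x - (b - s)))). assert (H8 := Rmin_r (Rabs (x - b)) (Rabs (x - (b - s)))).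
  repeat split; lra.
Qed.

Lemma Rabs_pos_ne a : a <> 0 -> 0 < Rabs a.
Proof. intros. apply Rabs_pos_lt. auto. Qed.

Lemma dl_pos c b s e x : goodE c b s e x -> 0 < dl c b s e x.
Proof.
  intros [[H1 [H2 H3]] H4]. unfold dl.
  repeat apply Rmin_glb_lt; apply Rabs_pos_ne; lra.
Qed.

Lemma local c b s k e x : valid c b s k -> goodE c b s e x ->
  let sg := if Rlt_dec x b then 1 else -1 in
  forall h, Rabs h < dl c b s e x ->
  goodE c b s e (x + h) /\
  (F c b s k (x + h) = F c b s k x + sg * h \/ F c b s k (x + h) = F c b s k x + sg * h + c \/
   F c b s k (x + h) = F c b s k x + sg * h - c).
Proof.
  intros Hv Hg sg h Hh. destruct (dl_bounds _ _ _ _ _ _ Hh) as [A1 [A2 [A3 [A4 A5]]]].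
  destruct Hg as [[G1 [G2 G3]] G4]. destruct Hv as [V1 [V2 V3]].
  replace x with (x - 0) in A1 by ring.
  apply near_same in A1. apply near_same in A2. apply near_same in A3. apply near_same in A4. apply near_same in A5.
  assert (x < b - s \/ b - s < x) as Hs1 by (destruct (Rlt_dec x (b - s)); [left|right]; lra).
  assert (x < b \/ b < x) as Hs2 by (destruct (Rlt_dec x b); [left|right]; lra).
  assert (x < e \/ e < x) as Hs3 by (destruct (Rlt_dec x e); [left|right]; lra).
  split.
  - repeat split; destruct Hs1, Hs2, Hs3; try lra.
  - unfold sg, F, wr. dall; destruct Hs1, Hs2; try lra.
Qed.

Lemma Rabs_tau tau h : tau = 1 \/ tau = -1 -> Rabs (tau * h) = Rabs h.
Proof. intros [-> | ->]. f_equal; ring. replace (-1 * h) with (- h) by ring. apply Rabs_Ropp. Qed.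

Lemma orbit_nbhd c b s k e y0 m : valid c b s k -> (1 <= m)%nat ->
  Reach (F c b s k) (goodE c b s e) y0 y0 m ->
  exists d, 0 < d /\ forall h, Rabs h < d -> Reach (F c b s k) (goodE c b s e) (y0 + h) (y0 + h) (m + m).
Proof.
  intros Hv Hm [Hg Hret].
  set (y := fun i => Nat.iter i (F c b s k) y0).
  set (Dn := fix Dn (n : nat) : R := match n with O => 1 | S n' => Rmin (Dn n') (dl c b s e (y n')) end).
  assert (HDpos : forall n, (n <= m)%nat -> 0 < Dn n).
  { induction n; intros Hn; simpl. lra. apply Rmin_glb_lt. apply IHn; lia. apply dl_pos. apply Hg. lia. }
  assert (HDle : forall n i, (i < n)%nat -> Dn n <= dl c b s e (y i)).
  { induction n; intros i Hi. lia. simpl. destruct (Nat.eq_dec i n).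
    subst. apply Rmin_r. eapply Rle_trans. apply Rmin_l. apply IHn. lia. }
  set (d := Dn m).
  assert (Hd : 0 < d) by (apply HDpos; lia).
  assert (Hyb : forall i h, (i <= m)%nat -> Rabs h < d -> 0 < y i + h < c /\ 0 < y i - h < c).
  { intros i h Hi Hh.
    assert (Hi' : exists j, (j < m)%nat /\ y i = y j).
    { destruct (Nat.eq_dec i m). exists 0%nat. split. lia. subst. unfold y. rewrite Hret. reflexivity.
      exists i. split. lia. reflexivity. }
    destruct Hi' as [j [Hj E]]. rewrite E.
    assert (Hl : Rabs h < dl c b s e (y j)) by (eapply Rlt_le_trans; [apply Hh| apply HDle; auto]).
    destruct (dl_bounds _ _ _ _ _ _ Hl) as [A1 [A2 _]].
    destruct (Hg j Hj) as [[G _] _]. fold (y j) in G.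
    revert A1 A2. unfold Rabs. repeat destruct Rcase_abs; intros; lra. }
  assert (Hclaim : forall i, (i <= m)%nat -> exists tau, (tau = 1 \/ tau = -1) /\
     forall h, Rabs h < d -> Reach (F c b s k) (goodE c b s e) (y0 + h) (y i + tau * h) i).
  { induction i as [|i IHi]; intros Hi.
    - exists 1. split. auto. intros h Hh. replace (y 0%nat + 1 * h) with (y0 + h) by (unfold y; simpl; ring). apply Reach0.
    - destruct (IHi ltac:(lia)) as [tau [Htau HR]].
      set (sg := if Rlt_dec (y i) b then 1 else -1).
      exists (sg * tau). split. unfold sg; destruct Rlt_dec; destruct Htau; subst; lra.
      intros h Hh.
      assert (Hth : Rabs (tau * h) < dl c b s e (y i)).
      { rewrite Rabs_tau by auto.
        eapply Rlt_le_trans. apply Hh. apply HDle. lia. }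
      destruct (local c b s k e (y i) Hv (Hg i ltac:(lia)) (tau * h) Hth) as [Hge HF].
      fold sg in HF.
      replace (S i) with (1 + i)%nat by lia.
      eapply Reach_trans. apply HR; auto.
      replace (y (1 + i)%nat + sg * tau * h) with (F c b s k (y i + tau * h)).
      apply Reach1. auto.
      assert (Hr := F_range c b s k _ Hv (proj1 Hge)).
      assert (Hb2 := Hyb (S i) h Hi Hh).
      assert (E : y (1 + i)%nat = F c b s k (y i)) by reflexivity.
      replace (y (S i)) with (F c b s k (y i)) in Hb2 by reflexivity.
      rewrite E. rewrite <- Rmult_assoc in HF.
      assert (Hst : sg * tau = 1 \/ sg * tau = -1) by (unfold sg; destruct Rlt_dec; destruct Htau; subst; lra).
      revert Hst HF Hr Hb2. generalize (sg * tau). intros u Hst HF Hr Hb2.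
      destruct Hst; subst u; destruct HF as [HF|[HF|HF]]; rewrite HF in *; lra. }
  exists d. split. auto. intros h Hh.
  destruct (Hclaim m (le_n _)) as [tau [Htau HR]].
  assert (Hym : y m = y0) by exact Hret.
  rewrite Hym in HR.
  assert (Hth : Rabs (tau * h) < d) by (rewrite Rabs_tau; auto).
  specialize (HR _ Hth) as HR2. specialize (HR _ Hh).
  replace (y0 + tau * (tau * h)) with (y0 + h) in HR2 by (destruct Htau as [-> | ->]; ring).
  eapply Reach_trans; eauto.
Qed.


Lemma arc_char a l x : 0 < l <= 1 -> 0 <= x < 1 -> (arc a l x <-> 0 < modone (x - a) < l).
Proof.
  intros Hl Hx. split.
  - intros [t [Ht E]]. subst x.
    assert (E1 : eqm (modone (a + t) - a) t).
    { destruct (modone_eqm (a + t)) as [z Hz]. exists z. lra. }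
    rewrite (modone_eqm_eq _ t E1). rewrite modone_id by lra. lra.
  - intros H. exists (modone (x - a)). split. auto.
    rewrite <- (modone_id x) at 1 by auto. apply modone_eqm_eq.
    eapply eqm_trans. 2: apply eqm_add; [apply eqm_refl| apply eqm_sym, modone_eqm]. apply eqm_of_eq. ring.
Qed.

Lemma arc_range a l x : arc a l x -> 0 <= x < 1.
Proof. intros [t [_ ->]]. apply modone_range. Qed.

Lemma arc_of a l x t : 0 < t < l -> eqm x (a + t) -> arc a l (modone x).
Proof. intros Ht E. exists t. split. auto. apply modone_eqm_eq. auto. Qed.

Lemma not_carc a l x m : l <= 1 -> l < m < 1 -> eqm x (a + m) -> ~ carc a l x.
Proof.
  intros Hl Hm E [t [Ht Ex]]. subst x.
  assert (E2 : eqm (a + t) (a + m)) by (eapply eqm_trans; [apply eqm_sym, modone_eqm| auto]).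
  destruct E2 as [z Hz]. assert (z = 0%Z) by (apply IZR_01; lra). subst z. simpl in Hz. lra.
Qed.

Definition disj (u1 l1 u2 l2 : R) := forall x, arc u1 l1 x -> arc u2 l2 x -> False.

Lemma disj_bound u1 l1 u2 l2 : 0 < l1 <= 1 -> 0 < l2 <= 1 -> disj u1 l1 u2 l2 ->
  l1 <= modone (u2 - u1) <= 1 - l2.
Proof.
  intros H1 H2 Hd. set (d := modone (u2 - u1)).
  assert (Hd0 := modone_range (u2 - u1)). fold d in Hd0.
  assert (Ed : eqm d (u2 - u1)) by apply modone_eqm.
  split.
  - destruct (Rle_dec l1 d) as [|Hlt]; auto. exfalso.
    set (ep := Rmin l2 (l1 - d) / 2).
    assert (0 < ep /\ ep < l2 /\ ep < l1 - d).
    { unfold ep. assert (Hm1 := Rmin_l l2 (l1 - d)). assert (Hm2 := Rmin_r l2 (l1 - d)).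
      assert (0 < Rmin l2 (l1 - d)) by (apply Rmin_glb_lt; lra). lra. }
    apply (Hd (modone (u2 + ep))).
    + apply arc_of with (d + ep). lra.
      eapply eqm_trans. 2: apply eqm_add; [apply eqm_refl | apply eqm_shift, eqm_sym, Ed].
      apply eqm_of_eq. ring.
    + apply arc_of with ep. lra. apply eqm_refl.
  - destruct (Rle_dec d (1 - l2)) as [|Hlt]; auto. exfalso.
    set (ep := Rmin l1 (d - (1 - l2)) / 2).
    assert (0 < ep /\ ep < l1 /\ ep < d - (1 - l2)).
    { unfold ep. assert (Hm1 := Rmin_l l1 (d - (1 - l2))). assert (Hm2 := Rmin_r l1 (d - (1 - l2))).
      assert (0 < Rmin l1 (d - (1 - l2))) by (apply Rmin_glb_lt; lra). lra. }
    apply (Hd (modone (u1 + ep))).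
    + apply arc_of with ep. lra. apply eqm_refl.
    + apply arc_of with (1 - d + ep). lra.
      destruct Ed as [z Hz]. exists (z - 1)%Z. rewrite minus_IZR. simpl. lra.
Qed.

Lemma tile3_order u1 l1 u2 l2 u3 l3 :
  0 < l1 <= 1 -> 0 < l2 <= 1 -> 0 < l3 <= 1 ->
  disj u1 l1 u2 l2 -> disj u1 l1 u3 l3 -> disj u2 l2 u3 l3 ->
  modone (u2 - u1) <= modone (u3 - u1) ->
  l1 <= modone (u2 - u1) /\ modone (u2 - u1) + l2 <= modone (u3 - u1) /\ modone (u3 - u1) + l3 <= 1.
Proof.
  intros H1 H2 H3 D12 D13 D23 Hle.
  assert (B12 := disj_bound _ _ _ _ H1 H2 D12).
  assert (B13 := disj_bound _ _ _ _ H1 H3 D13).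
  assert (B23 := disj_bound _ _ _ _ H2 H3 D23).
  assert (E : modone (u3 - u2) = modone (u3 - u1) - modone (u2 - u1)).
  { apply eqm_unique. apply modone_range. assert (R1 := modone_range (u3 - u1)). lra.
    eapply eqm_trans. apply modone_eqm. eapply eqm_trans. 2: apply eqm_add; [apply eqm_sym, modone_eqm | apply eqm_opp, eqm_sym, modone_eqm].
    apply eqm_of_eq. ring. }
  lra.
Qed.

Lemma eqm_of_modone u1 u2 d : modone (u2 - u1) = d -> eqm u2 (u1 + d).
Proof. intros <-. assert (H := modone_eqm (u2 - u1)). destruct H as [z Hz]. exists (-z)%Z. rewrite opp_IZR. lra. Qed.

Lemma eqm_of_modone' u1 u2 d e : modone (u2 - u1) = d -> e = u1 + d -> eqm u2 e.
Proof. intros H ->. apply eqm_of_modone; auto. Qed.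

Lemma tile3_len u1 l1 u2 l2 u3 l3 :
  0 < l1 <= 1 -> 0 < l2 <= 1 -> 0 < l3 <= 1 -> l1 + l2 + l3 = 1 ->
  disj u1 l1 u2 l2 -> disj u1 l1 u3 l3 -> disj u2 l2 u3 l3 ->
  (eqm u2 (u1 + l1) /\ eqm u3 (u1 + l1 + l2)) \/ (eqm u3 (u1 + l1) /\ eqm u2 (u1 + l1 + l3)).
Proof.
  intros H1 H2 H3 Hs D12 D13 D23.
  destruct (Rle_dec (modone (u2 - u1)) (modone (u3 - u1))).
  - left. destruct (tile3_order u1 l1 u2 l2 u3 l3) as [A [B C]]; auto.
    split; [apply (eqm_of_modone' u1 u2 l1) | apply (eqm_of_modone' u1 u3 (l1 + l2))]; try ring; lra.
  - right. destruct (tile3_order u1 l1 u3 l3 u2 l2) as [A [B C]]; auto.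
    intros x Ha Hb; eapply D23; eauto. lra.
    split; [apply (eqm_of_modone' u1 u3 l1) | apply (eqm_of_modone' u1 u2 (l1 + l3))]; try ring; lra.
Qed.

Definition covers (u1 l1 u2 l2 u3 l3 : R) := forall x, 0 <= x < 1 -> carc u1 l1 x \/ carc u2 l2 x \/ carc u3 l3 x.

Lemma tile3_cover_order u1 l1 u2 l2 u3 l3 :
  0 < l1 <= 1 -> 0 < l2 <= 1 -> 0 < l3 <= 1 ->
  disj u1 l1 u2 l2 -> disj u1 l1 u3 l3 -> disj u2 l2 u3 l3 -> covers u1 l1 u2 l2 u3 l3 ->
  modone (u2 - u1) <= modone (u3 - u1) ->
  modone (u2 - u1) = l1 /\ modone (u3 - u1) = l1 + l2 /\ l1 + l2 + l3 = 1.
Proof.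
  intros H1 H2 H3 D12 D13 D23 Cv Hle.
  destruct (tile3_order u1 l1 u2 l2 u3 l3) as [A [B C]]; auto.
  set (d2 := modone (u2 - u1)) in *. set (d3 := modone (u3 - u1)) in *.
  assert (E2 : eqm u2 (u1 + d2)) by (apply eqm_of_modone; reflexivity).
  assert (E3 : eqm u3 (u1 + d3)) by (apply eqm_of_modone; reflexivity).
  assert (R2 := modone_range (u2 - u1)). assert (R3 := modone_range (u3 - u1)). fold d2 d3 in R2, R3.
  assert (Gap : forall m, 0 < m < 1 -> (l1 < m) -> (m < d2 \/ d2 + l2 < m) -> (m < d3 \/ d3 + l3 < m) -> False).
  { intros m Hm G1 G2 G3.
    destruct (Cv (modone (u1 + m)) (modone_range _)) as [C1|[C2|C3]].
    - eapply (not_carc u1 l1 _ m). lra. lra. apply modone_eqm. eauto.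
    - destruct G2 as [G2|G2].
      + eapply (not_carc u2 l2 _ (m - d2 + 1)). lra. lra.
        apply eqm_trans with (u1 + m). apply modone_eqm. destruct E2 as [z Hz]. exists (- (z + 1))%Z. rewrite opp_IZR, plus_IZR. simpl. lra. eauto.
      + eapply (not_carc u2 l2 _ (m - d2)). lra. lra.
        apply eqm_trans with (u1 + m). apply modone_eqm. destruct E2 as [z Hz]. exists (- z)%Z. rewrite opp_IZR. lra. eauto.
    - destruct G3 as [G3|G3].
      + eapply (not_carc u3 l3 _ (m - d3 + 1)). lra. lra.
        apply eqm_trans with (u1 + m). apply modone_eqm. destruct E3 as [z Hz]. exists (- (z + 1))%Z. rewrite opp_IZR, plus_IZR. simpl. lra. eauto.
      + eapply (not_carc u3 l3 _ (m - d3)). lra. lra.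
        apply eqm_trans with (u1 + m). apply modone_eqm. destruct E3 as [z Hz]. exists (- z)%Z. rewrite opp_IZR. lra. eauto. }
  assert (d2 = l1).
  { destruct (Rle_dec d2 l1). lra. exfalso. apply (Gap ((l1 + d2) / 2)); lra. }
  assert (d3 = d2 + l2).
  { destruct (Rle_dec d3 (d2 + l2)). lra. exfalso. apply (Gap ((d2 + l2 + d3) / 2)); lra. }
  assert (d3 + l3 = 1).
  { destruct (Rle_dec 1 (d3 + l3)). lra. exfalso. apply (Gap ((d3 + l3 + 1) / 2)); lra. }
  lra.
Qed.

Lemma disj_sym u1 l1 u2 l2 : disj u1 l1 u2 l2 -> disj u2 l2 u1 l1.
Proof. intros H x A B. eapply H; eauto. Qed.

Lemma tile3_cover u1 l1 u2 l2 u3 l3 :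
  0 < l1 <= 1 -> 0 < l2 <= 1 -> 0 < l3 <= 1 ->
  disj u1 l1 u2 l2 -> disj u1 l1 u3 l3 -> disj u2 l2 u3 l3 -> covers u1 l1 u2 l2 u3 l3 ->
  l1 + l2 + l3 = 1 /\
  ((eqm u2 (u1 + l1) /\ eqm u3 (u2 + l2)) \/ (eqm u3 (u1 + l1) /\ eqm u2 (u3 + l3))).
Proof.
  intros H1 H2 H3 D12 D13 D23 Cv.
  destruct (Rle_dec (modone (u2 - u1)) (modone (u3 - u1))).
  - destruct (tile3_cover_order u1 l1 u2 l2 u3 l3) as [A [B C]]; auto.
    split. auto. left. split. apply eqm_of_modone; auto.
    eapply eqm_trans. apply eqm_of_modone. apply B. apply eqm_trans with (u1 + l1 + l2). apply eqm_of_eq; ring.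
    apply eqm_shift, eqm_sym, eqm_of_modone; auto.
  - destruct (tile3_cover_order u1 l1 u3 l3 u2 l2) as [A [B C]]; auto.
    apply disj_sym; auto. intros x Hx. destruct (Cv x Hx) as [?|[?|?]]; tauto. lra.
    split. lra. right. split. apply eqm_of_modone; auto.
    eapply eqm_trans. apply eqm_of_modone. apply B. apply eqm_trans with (u1 + l1 + l3). apply eqm_of_eq; ring.
    apply eqm_shift, eqm_sym, eqm_of_modone; auto.
Qed.


Lemma iso_class a l (T : R -> R) : 0 < l <= 1 ->
  (forall x, arc a l x -> 0 <= T x < 1) ->
  (forall x y, arc a l x -> arc a l y -> cdist (T x) (T y) = cdist x y) ->
  (exists r, forall t, 0 < t < l -> T (modone (a + t)) = modone (a + t + r)) \/
  (exists c, forall t, 0 < t < l -> T (modone (a + t)) = modone (c - t)).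
Proof.
  intros Hl Hr Hi.
  set (g := fun t => T (modone (a + t))).
  assert (Ha : forall t, 0 < t < l -> arc a l (modone (a + t))) by (intros t Ht; exists t; auto).
  assert (Hbase : forall t1 t2, 0 < t1 < l -> 0 < t2 < l ->
     eqm (g t1 - g t2) (t1 - t2) \/ eqm (g t1 - g t2) (t2 - t1)).
  { intros t1 t2 H1 H2. unfold g.
    destruct (modone_eqm (a + t1)) as [z1 Hz1]; destruct (modone_eqm (a + t2)) as [z2 Hz2].
    destruct (cdist_eq _ _ _ _ (Hi _ _ (Ha t1 H1) (Ha t2 H2))) as [E|E]; [left|right];
    eapply eqm_trans; eauto.
    exists (z1 - z2)%Z; rewrite minus_IZR; lra.
    exists (z2 - z1)%Z; rewrite minus_IZR; lra. }
  set (t0 := l / 2). assert (H0 : 0 < t0 < l) by (unfold t0; lra).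
  assert (Hdich : (forall t, 0 < t < l -> eqm (g t - g t0) (t - t0)) \/
                  (forall t, 0 < t < l -> eqm (g t - g t0) (t0 - t))).
  { apply NNPP. intros Hn. apply not_or_and in Hn. destruct Hn as [Hn1 Hn2].
    apply not_all_ex_not in Hn1. destruct Hn1 as [t1 Hn1].
    apply not_all_ex_not in Hn2. destruct Hn2 as [t2 Hn2].
    apply imply_to_and in Hn1. apply imply_to_and in Hn2.
    destruct Hn1 as [Ht1 Hn1]. destruct Hn2 as [Ht2 Hn2].
    assert (N1 : eqm (g t1 - g t0) (t0 - t1)) by (destruct (Hbase t1 t0) as [E|E]; auto; contradiction).
    assert (P2 : eqm (g t2 - g t0) (t2 - t0)) by (destruct (Hbase t2 t0) as [E|E]; auto; contradiction).
    destruct N1 as [z1 Hz1]. destruct P2 as [z2 Hz2].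
    destruct (Hbase t2 t1 Ht2 Ht1) as [[z3 Hz3]|[z3 Hz3]].
    - apply Hn1. exists (z2 - z3)%Z. rewrite minus_IZR. lra.
    - apply Hn2. exists (z1 + z3)%Z. rewrite plus_IZR. lra. }
  assert (Hg : forall t, 0 < t < l -> g t = modone (g t)).
  { intros t Ht. symmetry. apply modone_id. apply Hr. auto. }
  destruct Hdich as [P|N].
  - left. exists (g t0 - a - t0). intros t Ht. fold (g t). rewrite (Hg t Ht).
    apply modone_eqm_eq. destruct (P t Ht) as [z Hz]. exists z. lra.
  - right. exists (g t0 + t0). intros t Ht. fold (g t). rewrite (Hg t Ht).
    apply modone_eqm_eq. destruct (N t Ht) as [z Hz]. exists z. lra.
Qed.


Definition IsInt (r : R) : Prop := exists z, r = IZR z.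
Lemma isint_IZR z : IsInt (IZR z). Proof. exists z; auto. Qed.
Lemma isint_add a b : IsInt a -> IsInt b -> IsInt (a + b).
Proof. intros [z ->] [w ->]. exists (z + w)%Z. rewrite plus_IZR; auto. Qed.
Lemma isint_sub a b : IsInt a -> IsInt b -> IsInt (a - b).
Proof. intros [z ->] [w ->]. exists (z - w)%Z. rewrite minus_IZR; auto. Qed.
Lemma isint_opp a : IsInt a -> IsInt (- a).
Proof. intros [z ->]. exists (- z)%Z. rewrite opp_IZR; auto. Qed.
Lemma isint_mul a b : IsInt a -> IsInt b -> IsInt (a * b).
Proof. intros [z ->] [w ->]. exists (z * w)%Z. rewrite mult_IZR; auto. Qed.
Lemma isint_0 : IsInt 0. Proof. exists 0%Z; auto. Qed.
Lemma isint_1 : IsInt 1. Proof. exists 1%Z; auto. Qed.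
Lemma eqm_intro x y : IsInt (x - y) -> eqm x y.
Proof. intros [z Hz]. exists z. lra. Qed.

Ltac isint := repeat first [apply isint_add | apply isint_sub | apply isint_opp | apply isint_mul
  | apply isint_IZR | apply isint_0 | apply isint_1].
Ltac solve_eqm := apply eqm_intro; match goal with |- IsInt ?e => ring_simplify e end; isint.

Lemma exists_nat x : exists N, x <= INR N.
Proof.
  destruct (archimed x) as [H _]. exists (Z.to_nat (up x)).
  destruct (Z.le_gt_cases 0 (up x)) as [l|g].
  - rewrite INR_IZR_INZ, Znat.Z2Nat.id by auto. lra.
  - apply IZR_lt in g. simpl in g. pose proof (pos_INR (Z.to_nat (up x))). lra.
Qed.

Lemma Reach_mono f (P Q : R -> Prop) x z n : (forall w, P w -> Q w) -> Reach f P x z n -> Reach f Q x z n.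
Proof. intros H [H1 H2]. split; auto. Qed.

Lemma test_eqm a b (z w : Z) : a = b + IZR z -> eqm (a + 1) (b + IZR w).
Proof. intros ->. solve_eqm. Qed.

Lemma conj_step aj lj a1 l1 a2 l2 cc r1 r2 s (D : R -> Prop) (T : R -> R) kk y :
  0 < lj -> 0 < l1 -> 0 < l2 -> lj + l1 + l2 = 1 ->
  eqm a1 (aj + lj) -> eqm a2 (a1 + l1) ->
  (forall x, D x <-> arc aj lj x \/ arc a1 l1 x \/ arc a2 l2 x) ->
  (forall t, 0 < t < lj -> T (modone (aj + t)) = modone (cc - t)) ->
  (forall t, 0 < t < l1 -> T (modone (a1 + t)) = modone (a1 + t + r1)) ->
  (forall t, 0 < t < l2 -> T (modone (a2 + t)) = modone (a2 + t + r2)) ->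
  ((s = 0 /\ eqm (a1 + r1) cc /\ eqm (a2 + r2) (cc + l1)) \/
   (s = l2 /\ eqm (a2 + r2) cc /\ eqm (a1 + r1) (cc + l2))) ->
  kk = modone (cc - a1) ->
  good 1 (l1 + l2) s y -> y <> l1 ->
  D (modone (a1 + y)) /\ T (modone (a1 + y)) = modone (a1 + F 1 (l1 + l2) s kk y).
Proof.
  intros Hlj Hl1 Hl2 Hsum E1 E2 HD Hfl Hr1 Hr2 Htile Hkk [Hy [Hy1 Hy2]] Hne.
  assert (Ek := modone_eqm (cc - a1)). rewrite <- Hkk in Ek.
  assert (Rk := modone_range (cc - a1)). rewrite <- Hkk in Rk.
  destruct E1 as [z1 Hz1]. destruct E2 as [z2 Hz2]. destruct Ek as [zk Hzk].
  destruct (Rlt_dec y l1) as [Ha|Ha]; [|destruct (Rlt_dec y (l1 + l2)) as [Hb|Hb]].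
  - split. apply HD. right; left. exists y. split; auto; lra.
    rewrite Hr1 by lra. apply modone_eqm_eq.
    unfold F, wr. destruct Htile as [[Hs [[p Hp] [q Hq]]]|[Hs [[p Hp] [q Hq]]]]; subst s;
    dall; try lra;
    (replace (a1 + y + r1) with ((a1 + r1) + y) by ring); first [rewrite Hp | rewrite Hq]; rewrite Hzk; solve_eqm.
  - assert (Eh : modone (a1 + y) = modone (a2 + (y - l1))) by (apply modone_eqm_eq; rewrite Hz2; solve_eqm).
    split. apply HD. right; right. rewrite Eh. exists (y - l1). split; auto; lra.
    rewrite Eh, Hr2 by lra. apply modone_eqm_eq.
    unfold F, wr. destruct Htile as [[Hs [[p Hp] [q Hq]]]|[Hs [[p Hp] [q Hq]]]]; subst s;
    dall; try lra;
    (replace (a2 + (y - l1) + r2) with ((a2 + r2) + (y - l1)) by ring); first [rewrite Hq | rewrite Hp]; rewrite Hzk; solve_eqm.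
  - assert (Eh : modone (a1 + y) = modone (aj + (y - (l1 + l2)))) by (apply modone_eqm_eq; rewrite Hz1; replace lj with (1 - l1 - l2) by lra; solve_eqm).
    split. apply HD. left. rewrite Eh. exists (y - (l1 + l2)). split; auto; lra.
    rewrite Eh, Hfl by lra. apply modone_eqm_eq.
    unfold F, wr. destruct Htile as [[Hs _]|[Hs _]]; subst s; dall; try lra; rewrite Hzk; solve_eqm.
Qed.

Lemma transfer (f : R -> R) (P : R -> Prop) (h : R -> R) (D : R -> Prop) (T : R -> R) y z n :
  (forall w, P w -> D (h w) /\ T (h w) = h (f w)) ->
  Reach f P y z n -> in_dom_iter D T n (h y) /\ Nat.iter n T (h y) = h z.
Proof.
  intros H [HP Hz].
  assert (Hi : forall i, (i <= n)%nat -> Nat.iter i T (h y) = h (Nat.iter i f y)).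
  { induction i; intros Hi. reflexivity. simpl. rewrite IHi by lia.
    destruct (H _ (HP i ltac:(lia))) as [_ E]. auto. }
  split.
  - intros i Hin. rewrite Hi by lia. apply (H _ (HP i Hin)).
  - rewrite Hi by lia. rewrite Hz. reflexivity.
Qed.

Section Cycle.
Variables (D : R -> Prop) (T : R -> R) (q : R) (M : nat).
Hypotheses (HM : (1 <= M)%nat) (Hdom : in_dom_iter D T M q) (Hq : Nat.iter M T q = q)
  (Hinj : forall x y, D x -> D y -> T x = T y -> x = y).

Definition cyc := map (fun i => Nat.iter i T q) (seq 0 M).

Lemma cyc_in i : (i < M)%nat -> In (Nat.iter i T q) cyc.
Proof. intros. unfold cyc. apply (in_map (fun i => Nat.iter i T q)). apply in_seq. lia. Qed.

Lemma cyc_inv z : In z cyc -> exists i, (i < M)%nat /\ z = Nat.iter i T q.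
Proof. unfold cyc. intros H. apply in_map_iff in H. destruct H as [i [E Hi]]. apply in_seq in Hi. exists i. split. lia. auto. Qed.

Lemma cyc_fwd z : In z cyc -> D z /\ In (T z) cyc.
Proof.
  intros H. destruct (cyc_inv z H) as [i [Hi ->]]. split. apply Hdom. auto.
  destruct (Nat.eq_dec (S i) M).
  - replace (T (Nat.iter i T q)) with (Nat.iter (S i) T q) by reflexivity. rewrite e, Hq.
    apply (cyc_in 0). lia.
  - apply (cyc_in (S i)). lia.
Qed.

Lemma cyc_back z : D z -> In (T z) cyc -> In z cyc.
Proof.
  intros Hz H. destruct (cyc_inv _ H) as [i [Hi E]]. destruct i as [|i].
  - simpl in E. rewrite <- Hq in E.
    replace M with (S (M - 1)) in E by lia. simpl in E.
    apply Hinj in E; auto. rewrite E. apply cyc_in. lia. apply Hdom. lia.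
  - simpl in E. apply Hinj in E; auto. rewrite E. apply cyc_in. lia. apply Hdom. lia.
Qed.

Lemma cyc_fwd_iter n z : In z cyc -> In (Nat.iter n T z) cyc.
Proof. induction n; intros H. auto. simpl. apply cyc_fwd. auto. Qed.

Lemma cyc_back_iter n z : in_dom_iter D T n z -> In (Nat.iter n T z) cyc -> In z cyc.
Proof.
  revert z. induction n; intros z Hd H. auto.
  apply cyc_back. apply (Hd 0%nat). lia.
  apply IHn. intros i Hi. rewrite <- Nat.iter_succ_r. apply Hd. lia.
  rewrite <- Nat.iter_succ_r. auto.
Qed.

Lemma cyc_orbit p q' : In p cyc -> in_orbit D T p q' -> In q' cyc.
Proof.
  intros Hp [n [[Hd E]|[Hd E]]].
  - subst q'. apply cyc_fwd_iter. auto.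
  - apply (cyc_back_iter n); auto. rewrite E. auto.
Qed.
End Cycle.

Lemma finite_not_dense C : (forall z, In z C -> 0 <= z < 1) ->
  exists x e, in_S1 x /\ 0 < e /\ forall z, In z C -> e <= cdist x z.
Proof.
  intros HC. destruct (avoid C 0 1 ltac:(lra)) as [x [Hx Hn]].
  exists x, (fold_right (fun z acc => Rmin (cdist x z) acc) 1 C).
  split. unfold in_S1; lra.
  revert HC Hn. induction C as [|a C IH]; intros HC Hn; simpl.
  - split. lra. tauto.
  - assert (IH' := IH (fun z Hz => HC z (or_intror Hz)) (fun H => Hn (or_intror H))).
    destruct IH' as [IH1 IH2]. split.
    + apply Rmin_glb_lt; auto. apply cdist_pos. lra. apply HC; simpl; auto. intro E; apply Hn; simpl; auto.
    + intros z [<-|Hz]. apply Rmin_l. eapply Rle_trans. apply Rmin_r. auto.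
Qed.

Lemma core_ordered aj lj a1 l1 a2 l2 cc r1 r2 s (D : R -> Prop) (T : R -> R) :
  0 < lj -> 0 < l1 -> 0 < l2 -> lj + l1 + l2 = 1 ->
  eqm a1 (aj + lj) -> eqm a2 (a1 + l1) ->
  (forall x, D x <-> arc aj lj x \/ arc a1 l1 x \/ arc a2 l2 x) ->
  (forall x, D x -> in_S1 (T x)) ->
  (forall x y, D x -> D y -> T x = T y -> x = y) ->
  (forall t, 0 < t < lj -> T (modone (aj + t)) = modone (cc - t)) ->
  (forall t, 0 < t < l1 -> T (modone (a1 + t)) = modone (a1 + t + r1)) ->
  (forall t, 0 < t < l2 -> T (modone (a2 + t)) = modone (a2 + t + r2)) ->
  ((s = 0 /\ eqm (a1 + r1) cc /\ eqm (a2 + r2) (cc + l1)) \/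
   (s = l2 /\ eqm (a2 + r2) cc /\ eqm (a1 + r1) (cc + l2))) ->
  has_periodic_point D T /\ ~ transitive D T.
Proof.
  intros Hlj Hl1 Hl2 Hsum E1 E2 HD HTS Hinj Hfl Hr1 Hr2 Htile.
  set (b := l1 + l2). set (k := modone (cc - a1)). set (h := fun y => modone (a1 + y)).
  assert (Hconj : forall y, goodE 1 b s l1 y -> D (h y) /\ T (h y) = h (F 1 b s k y)).
  { intros y [Hg Hne]. apply (conj_step aj lj a1 l1 a2 l2 cc r1 r2 s D T k y); auto. }
  assert (Hv : valid 1 b s k).
  { unfold valid, b, k. assert (R := modone_range (cc - a1)). destruct Htile as [[-> _]|[-> _]]; lra. }
  destruct (exists_nat (1 / lj)) as [N HN].
  assert (HN' : 1 <= INR N * (1 - b)).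
  { replace (1 - b) with lj by (unfold b; lra).
    apply Rmult_le_compat_r with (r := lj) in HN; [|lra].
    replace (1 / lj * lj) with 1 in HN by (field; lra). lra. }
  destruct (abs_per N 1 b s k [l1] Hv HN') as [y0 [m [Hm HR]]].
  assert (HR' : Reach (F 1 b s k) (goodE 1 b s l1) y0 y0 m).
  { eapply Reach_mono; [|exact HR]. intros w [Hg Hn]. split; auto. intro E; apply Hn; subst; simpl; auto. }
  destruct (orbit_nbhd 1 b s k l1 y0 m Hv Hm HR') as [d [Hd Hnb]].
  assert (HDS : forall x, D x -> 0 <= x < 1).
  { intros x Hx. apply HD in Hx. destruct Hx as [A|[A|A]]; eapply arc_range; eauto. }
  split.
  - destruct (transfer _ _ h D T y0 y0 m Hconj HR') as [Hdm Hit].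
    exists (h y0), m. auto.
  - intros [p [Hp Hdense]].
    assert (Hx0 : in_S1 (h y0)) by apply modone_range.
    destruct (Hdense (h y0) d Hx0 Hd) as [q [Horb Hcd]].
    assert (Hqr : 0 <= q < 1).
    { destruct Horb as [n [[Hdn E]|[Hdn E]]].
      - destruct n. simpl in E. subst q. exact Hp.
        subst q. simpl. apply HTS. replace (Nat.iter n T p) with (Nat.iter n T p) by reflexivity. apply Hdn. lia.
      - destruct n. simpl in E. subst q. exact Hp. apply HDS. apply (Hdn 0%nat). lia. }
    destruct (cdist_small _ _ _ Hcd) as [dd [Hdd Eq]].
    assert (Eqh : q = h (y0 + dd)).
    { unfold h. rewrite <- (modone_id q) by auto. apply modone_eqm_eq. eapply eqm_trans. apply Eq.
      unfold h. destruct (modone_eqm (a1 + y0)) as [z Hz]. exists z. lra. }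
    destruct (transfer _ _ h D T _ _ _ Hconj (Hnb dd Hdd)) as [Hdq Hitq].
    rewrite <- Eqh in Hdq, Hitq.
    assert (HM : (1 <= m + m)%nat) by lia.
    assert (Hpc : In p (cyc T q (m + m))).
    { destruct Horb as [n [[Hdn E]|[Hdn E]]].
      - apply (cyc_back_iter D T q (m + m) HM Hdq Hitq Hinj n); auto. rewrite <- E. apply (cyc_in T q (m + m) HM 0). lia.
      - rewrite <- E. apply (cyc_fwd_iter D T q (m + m) HM Hdq Hitq). apply (cyc_in T q (m + m) HM 0). lia. }
    destruct (finite_not_dense (cyc T q (m + m))) as [x [e [Hx [He Hle]]]].
    { intros z Hz. apply HDS. apply (cyc_fwd D T q (m + m) HM Hdq Hitq z Hz). }
    destruct (Hdense x e Hx He) as [q' [Horb' Hcd']].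
    assert (In q' (cyc T q (m + m))) by (eapply cyc_orbit; eauto).
    specialize (Hle q' H). lra.
Qed.

Lemma img_rot (T : R -> R) a l r z :
  (forall t, 0 < t < l -> T (modone (a + t)) = modone (a + t + r)) ->
  arc (a + r) l z -> exists x, arc a l x /\ T x = z.
Proof.
  intros H [t [Ht ->]]. exists (modone (a + t)). split. exists t; auto.
  rewrite H by auto. f_equal. ring.
Qed.

Lemma img_flip (T : R -> R) a l cc z :
  (forall t, 0 < t < l -> T (modone (a + t)) = modone (cc - t)) ->
  arc (cc - l) l z -> exists x, arc a l x /\ T x = z.
Proof.
  intros H [t [Ht ->]]. exists (modone (a + (l - t))). split. exists (l - t); split; auto; lra.
  rewrite H by lra. f_equal. ring.
Qed.

Lemma img_disj (D : R -> Prop) (T : R -> R) a1 l1 a2 l2 u1 u2 :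
  (forall x y, D x -> D y -> T x = T y -> x = y) ->
  (forall x, arc a1 l1 x -> D x) -> (forall x, arc a2 l2 x -> D x) ->
  disj a1 l1 a2 l2 ->
  (forall z, arc u1 l1 z -> exists x, arc a1 l1 x /\ T x = z) ->
  (forall z, arc u2 l2 z -> exists x, arc a2 l2 x /\ T x = z) ->
  disj u1 l1 u2 l2.
Proof.
  intros Hinj HD1 HD2 Hd I1 I2 z Z1 Z2.
  destruct (I1 z Z1) as [x [Hx Ex]]. destruct (I2 z Z2) as [y [Hy Ey]].
  assert (x = y) by (apply Hinj; auto; congruence). subst y. eapply Hd; eauto.
Qed.

Lemma core_ordered2 aj lj a1 l1 a2 l2 cc r1 r2 (D : R -> Prop) (T : R -> R) :
  0 < lj <= 1 -> 0 < l1 <= 1 -> 0 < l2 <= 1 -> lj + l1 + l2 = 1 ->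
  eqm a1 (aj + lj) -> eqm a2 (a1 + l1) ->
  disj aj lj a1 l1 -> disj aj lj a2 l2 -> disj a1 l1 a2 l2 ->
  (forall x, D x <-> arc aj lj x \/ arc a1 l1 x \/ arc a2 l2 x) ->
  (forall x, D x -> in_S1 (T x)) ->
  (forall x y, D x -> D y -> T x = T y -> x = y) ->
  (forall t, 0 < t < lj -> T (modone (aj + t)) = modone (cc - t)) ->
  (forall t, 0 < t < l1 -> T (modone (a1 + t)) = modone (a1 + t + r1)) ->
  (forall t, 0 < t < l2 -> T (modone (a2 + t)) = modone (a2 + t + r2)) ->
  has_periodic_point D T /\ ~ transitive D T.
Proof.
  intros Hlj Hl1 Hl2 Hsum E1 E2 Dj1 Dj2 D12 HD HTS Hinj Hfl Hr1 Hr2.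
  assert (Hj : forall x, arc aj lj x -> D x) by (intros; apply HD; auto).
  assert (H1 : forall x, arc a1 l1 x -> D x) by (intros; apply HD; auto).
  assert (H2 : forall x, arc a2 l2 x -> D x) by (intros; apply HD; auto).
  assert (IJ := img_flip T aj lj cc). assert (I1 := img_rot T a1 l1 r1). assert (I2 := img_rot T a2 l2 r2).
  assert (Hd1 : disj (cc - lj) lj (a1 + r1) l1) by (eapply img_disj; eauto).
  assert (Hd2 : disj (cc - lj) lj (a2 + r2) l2) by (eapply img_disj; eauto).
  assert (Hd3 : disj (a1 + r1) l1 (a2 + r2) l2) by (eapply img_disj; eauto).
  destruct (tile3_len (cc - lj) lj (a1 + r1) l1 (a2 + r2) l2 Hlj Hl1 Hl2 Hsum Hd1 Hd2 Hd3) as [[A B]|[A B]].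
  - apply (core_ordered aj lj a1 l1 a2 l2 cc r1 r2 0 D T); try lra; auto.
    left. split. auto. split; (eapply eqm_trans; [eauto| apply eqm_of_eq; ring]).
  - apply (core_ordered aj lj a1 l1 a2 l2 cc r1 r2 l2 D T); try lra; auto.
    right. split. auto. split; (eapply eqm_trans; [eauto| apply eqm_of_eq; ring]).
Qed.

Lemma core3 aj lj ap lp aq lq (D : R -> Prop) (T : R -> R) :
  0 < lj <= 1 -> 0 < lp <= 1 -> 0 < lq <= 1 ->
  disj aj lj ap lp -> disj aj lj aq lq -> disj ap lp aq lq ->
  covers aj lj ap lp aq lq ->
  (forall x, D x <-> arc aj lj x \/ arc ap lp x \/ arc aq lq x) ->
  (forall x, D x -> in_S1 (T x)) ->
  (forall x y, D x -> D y -> T x = T y -> x = y) ->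
  (forall x y, arc ap lp x -> arc ap lp y -> cdist (T x) (T y) = cdist x y) ->
  (forall x y, arc aq lq x -> arc aq lq y -> cdist (T x) (T y) = cdist x y) ->
  is_flip aj lj T -> ~ is_flip ap lp T -> ~ is_flip aq lq T ->
  has_periodic_point D T /\ ~ transitive D T.
Proof.
  intros Hlj Hlp Hlq Djp Djq Dpq Cv HD HTS Hinj Ip Iq [cc Hfl] Np Nq.
  destruct (tile3_cover aj lj ap lp aq lq Hlj Hlp Hlq Djp Djq Dpq Cv) as [Hsum Hord].
  assert (Rp : forall x, arc ap lp x -> 0 <= T x < 1) by (intros x Hx; apply HTS, HD; auto).
  assert (Rq : forall x, arc aq lq x -> 0 <= T x < 1) by (intros x Hx; apply HTS, HD; auto).
  destruct (iso_class ap lp T Hlp Rp Ip) as [[rp Hrp]|Hfp]; [|exfalso; apply Np; exact Hfp].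
  destruct (iso_class aq lq T Hlq Rq Iq) as [[rq Hrq]|Hfq]; [|exfalso; apply Nq; exact Hfq].
  destruct Hord as [[A B]|[A B]].
  - apply (core_ordered2 aj lj ap lp aq lq cc rp rq D T); auto; lra.
  - apply (core_ordered2 aj lj aq lq ap lp cc rq rp D T); auto; try lra.
    apply disj_sym; auto.
    intros x. rewrite HD. tauto.
Qed.

Lemma main_case (D : R -> Prop) (T : R -> R) a l (j p q : nat) :
  CET_pieces 3 a l D T ->
  (j < 3)%nat -> (p < 3)%nat -> (q < 3)%nat -> j <> p -> j <> q -> p <> q ->
  (forall i, (i < 3)%nat -> i = j \/ i = p \/ i = q) ->
  is_flip (a j) (l j) T -> (forall i, (i < 3)%nat -> is_flip (a i) (l i) T -> i = j) ->
  has_periodic_point D T /\ ~ transitive D T.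
Proof.
  intros [Hrng [Hdisj [Hcov [HDeq [HTS [Hinj [Hiso _]]]]]]] Hj Hp Hq Hjp Hjq Hpq Hall Hfl Hun.
  apply (core3 (a j) (l j) (a p) (l p) (a q) (l q) D T).
  - apply Hrng; auto.
  - apply Hrng; auto.
  - apply Hrng; auto.
  - intros x A B. eapply (Hdisj j p x); eauto.
  - intros x A B. eapply (Hdisj j q x); eauto.
  - intros x A B. eapply (Hdisj p q x); eauto.
  - intros x Hx. destruct (Hcov x Hx) as [i [Hi C]]. destruct (Hall i Hi) as [ -> | [ -> | -> ] ]; tauto.
  - intros x. rewrite HDeq. split.
    + intros [i [Hi A]]. destruct (Hall i Hi) as [ -> | [ -> | -> ] ]; tauto.
    + intros [A|[A|A]]; [exists j | exists p | exists q]; auto.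
  - auto.
  - auto.
  - intros; apply (Hiso p); auto.
  - intros; apply (Hiso q); auto.
  - auto.
  - intros Hf. apply Hjp. symmetry. apply Hun; auto.
  - intros Hf. apply Hjq. symmetry. apply Hun; auto.
Qed.

Theorem theorem3p1 :
  forall (D : R -> Prop) (T : R -> R),
    CET_one_flip 3 D T -> has_periodic_point D T /\ ~ transitive D T.
Proof.
  intros D T [a [l [HP [j [Hj [Hfl Hun]]]]]].
  destruct j as [|[|[|j]]]; [| | | lia].
  - apply (main_case D T a l 0 1 2); auto; lia.
  - apply (main_case D T a l 1 0 2); auto; lia.
  - apply (main_case D T a l 2 0 1); auto; lia.
Qed.
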